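(* Let $N,M_t,M_r$ be positive integers, $P_0>0$, $\sigma^2>0$, $\alpha\in\mathbb C\setminus\{0\}$, $L>0$, $\theta,\theta_1,\theta_2\in\mathbb R$, and let $\mathbf G_t=\sqrt{L}\,\mathbf a(\theta_2)\mathbf c^T(\theta_1)$, $\mathbf G_r=\sqrt{L}\,\mathbf b(\theta_1)\mathbf a^T(\theta_2)$. If $N>1/\sqrt{L}$, then $\mathrm{SNR}_1^\star>\mathrm{SNR}_2^\star$, where $\mathrm{SNR}_i^\star=\max_{\mathbf R,\mathbf\Phi}\mathrm{SNR}_i(\mathbf R,\mathbf\Phi)$ with the maximum over positive semidefinite $\mathbf R\in\mathbb C^{M_t\times M_t}$ with $\mathrm{tr}(\mathbf R)\le P_0$ and $\mathbf\Phi=\mathrm{diag}(e^{j\phi_1},\dots,e^{j\phi_N})$, $\phi_n\in\mathbb R$.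
   Context: $j=\sqrt{-1}$. Fix $\hat d>0$, $\lambda>0$. For a positive integer $K$, $\mathbf s_K(\theta)\in\mathbb C^K$ has $k$-th entry $e^{j\pi(2k-K-1)\hat d\sin\theta/\lambda}$. Set $\mathbf a(\theta)=\mathbf s_N(\theta)$, $\mathbf b(\theta)=\mathbf s_{M_r}(\theta)$, $\mathbf c(\theta)=\mathbf s_{M_t}(\theta)$. Define $\mathrm{SNR}_1(\mathbf R,\mathbf\Phi)=\frac{|\alpha|^2\|\mathbf G_r\mathbf\Phi^T\mathbf a(\theta)\|^2\,\mathbf a^T(\theta)\mathbf\Phi\mathbf G_t\mathbf R\mathbf G_t^H\mathbf\Phi^H\mathbf a^*(\theta)}{\sigma^2}$, $\mathrm{SNR}_2(\mathbf R,\mathbf\Phi)=\frac{|\alpha|^2\|\mathbf b(\theta)\|^2\,\mathbf a^T(\theta)\mathbf\Phi\mathbf G_t\mathbf R\mathbf G_t^H\mathbf\Phi^H\mathbf a^*(\theta)}{\sigma^2}$. *)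

(* Defs.v *)
From HB Require Import structures.
From mathcomp Require Import all_boot all_order all_algebra.
From mathcomp Require Import complex.
From mathcomp Require Import classical_sets reals trigo.
Set Implicit Arguments. Unset Strict Implicit. Unset Printing Implicit Defensive.
Import Order.TTheory GRing.Theory Num.Theory Num.Def.
Local Open Scope ring_scope.
Local Open Scope complex_scope.
Local Open Scope classical_set_scope.

Section Defs.
Variable R : realType.
Local Notation C := R[i].

Definition expj (x : R) : C := Complex (cos x) (sin x).

Definition hermT m n (A : 'M[C]_(m, n)) : 'M[C]_(n, m) := (map_mx conjC A)^T.
Definition conjM m n (A : 'M[C]_(m, n)) : 'M[C]_(m, n) := map_mx conjC A.

(* steering vector s_K(theta): k-th entry (k = 1..K) is
   exp(j pi (2k - K - 1) dhat sin(theta) / lambda); here i = k - 1. *)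
Definition steer (dhat lam : R) (K : nat) (th : R) : 'cV[C]_K :=
  \col_(i < K) expj (pi * ((2 * i.+1)%:R - K%:R - 1) * dhat * sin th / lam).

Definition norm2 K (v : 'cV[C]_K) : R := \sum_(i < K) (complex.Re (v i 0 * conjC (v i 0))).

Definition psd M (Rm : 'M[C]_M) : Prop :=
  hermT Rm = Rm /\ forall x : 'cV[C]_M, 0 <= (hermT x *m Rm *m x) 0 0.

Definition phase_mx N (phi : 'I_N -> R) : 'M[C]_N := diag_mx (\row_n expj (phi n)).

Definition quadTx N Mt (a : 'cV[C]_N) (Phi : 'M[C]_N) (Gt : 'M[C]_(N, Mt))
  (Rm : 'M[C]_Mt) : C :=
  (a^T *m Phi *m Gt *m Rm *m hermT Gt *m hermT Phi *m conjM a) 0 0.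

Definition SNR1 N Mt Mr (alpha : C) (sigma2 : R) (a : 'cV[C]_N) (b : 'cV[C]_Mr)
  (Gt : 'M[C]_(N, Mt)) (Gr : 'M[C]_(Mr, N)) (Rm : 'M[C]_Mt) (Phi : 'M[C]_N) : C :=
  `|alpha| ^+ 2 * (norm2 (Gr *m Phi^T *m a))%:C * quadTx a Phi Gt Rm / sigma2%:C.

Definition SNR2 N Mt Mr (alpha : C) (sigma2 : R) (a : 'cV[C]_N) (b : 'cV[C]_Mr)
  (Gt : 'M[C]_(N, Mt)) (Gr : 'M[C]_(Mr, N)) (Rm : 'M[C]_Mt) (Phi : 'M[C]_N) : C :=
  `|alpha| ^+ 2 * (norm2 b)%:C * quadTx a Phi Gt Rm / sigma2%:C.

(* The SNR is real on the feasible set; we take its real part and the sup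
   (which is attained: the feasible set is compact). *)
Definition SNRstar N Mt (P0 : R)
  (snr : 'M[C]_Mt -> 'M[C]_N -> C) : R :=
  sup [set x : R | exists (Rm : 'M[C]_Mt) (phi : 'I_N -> R),
        psd Rm /\ \tr Rm <= P0%:C /\ x = complex.Re (snr Rm (phase_mx phi))].

End Defs.

(* Main.v *)
Require Import Defs.
From HB Require Import structures.
From mathcomp Require Import all_boot all_order all_algebra.
From mathcomp Require Import complex.
From mathcomp Require Import classical_sets reals trigo.
From mathcomp Require Import ring lra.
Import Order.TTheory GRing.Theory Num.Theory.
Local Open Scope ring_scope.
Local Open Scope complex_scope.

Section H.
Variable R : realType.
Local Notation C := R[i].

Lemma expjJ (x : R) : expj x * Num.conj_op (expj x) = 1.
Proof.
rewrite /expj /=; simpc; apply/eqP; rewrite eq_complex /=; apply/andP; split; apply/eqP.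
  by have := cos2Dsin2 x; rewrite !expr2.
by ring.
Qed.

Lemma expjD (x y : R) : expj x * expj y = expj (x + y).
Proof.
rewrite /expj cosD sinD; simpc; apply/eqP; rewrite eq_complex /=; apply/andP; split; apply/eqP; ring.
Qed.

Lemma expj0 : expj 0 = 1 :> C.
Proof. by rewrite /expj cos0 sin0. Qed.

Lemma norm_expj (x : R) : `|expj x| = 1.
Proof. by rewrite normc_def /= cos2Dsin2 sqrtr1. Qed.

Lemma hermT_mul m n p (A : 'M[C]_(m,n)) (B : 'M[C]_(n,p)) :
  hermT (A *m B) = hermT B *m hermT A.
Proof. by rewrite /hermT map_mxM trmx_mul. Qed.

Lemma hermTZ m n k (A : 'M[C]_(m,n)) : hermT (k *: A) = Num.conj_op k *: hermT A.
Proof. by apply/matrixP=> i j; rewrite !mxE rmorphM. Qed.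

Lemma hermTB m n (A B : 'M[C]_(m,n)) : hermT (A - B) = hermT A - hermT B.
Proof. by apply/matrixP=> i j; rewrite !mxE rmorphB. Qed.

Lemma hermT_tr n (v : 'cV[C]_n) : hermT v^T = conjM v.
Proof. by apply/matrixP=> i j; rewrite !mxE. Qed.

Lemma hermTK m n (A : 'M[C]_(m,n)) : hermT (hermT A) = A.
Proof. by apply/matrixP=> i j; rewrite !mxE conjCK. Qed.

Lemma hermT_conjM n (v : 'cV[C]_n) : hermT (conjM v) = v^T.
Proof. by apply/matrixP=> i j; rewrite !mxE conjCK. Qed.

Lemma Qdelta n (Rm : 'M[C]_n) i j :
  (hermT (delta_mx i 0 : 'cV[C]_n) *m Rm *m (delta_mx j 0 : 'cV[C]_n)) 0 0 = Rm i j.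
Proof.
have -> : hermT (delta_mx i 0 : 'cV[C]_n) = (delta_mx 0 i : 'rV[C]_n).
  by apply/matrixP=> a b; rewrite !mxE rmorph_nat andbC.
by rewrite -rowE -colE !mxE.
Qed.

Lemma Qscale n (Rm : 'M[C]_n) (u v : 'cV[C]_n) (a b : C) :
  (hermT (a *: u) *m Rm *m (b *: v)) 0 0 = Num.conj_op a * b * (hermT u *m Rm *m v) 0 0.
Proof. by rewrite hermTZ -!scalemxAl scalemxAr -!scalemxAr scalerA [LHS]mxE. Qed.

Lemma Qexp n (Rm : 'M[C]_n) (x : 'cV[C]_n) :
  (hermT x *m Rm *m x) 0 0 = \sum_i \sum_j Num.conj_op (x i 0) * Rm i j * x j 0.
Proof.
rewrite !mxE exchange_big /=; apply: eq_bigr => j _; rewrite !mxE big_distrl /=.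
by apply: eq_bigr => i _; rewrite !mxE.
Qed.

End H.

Section H2.
Variable R : realType.
Local Notation C := R[i].

Lemma alg1 (F : comRingType) (a b c d : F) : a - c - (b - d) = a - b - (c - d).
Proof. ring. Qed.
Lemma alg2 (F : comRingType) (a b p q r s u v : F) :
  1 * a - p * q * r - (u * v * s - 1 * b) = a + b - p * r * q - u * s * v.
Proof. ring. Qed.

Lemma alg3 (F : comRingType) (n : nat) (T Q : F) :
  T *+ n + T *+ n - Q - Q = (n%:R * T - Q) * 2.
Proof. rewrite -mulr_natl; ring. Qed.

Lemma mxEB m n (A B : 'M[C]_(m,n)) i j : (A - B) i j = A i j - B i j.
Proof. by rewrite !mxE. Qed.

Lemma Qsub n (Rm : 'M[C]_n) (u v w z : 'cV[C]_n) :
  (hermT (u - v) *m Rm *m (w - z)) 0 0 =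
  (hermT u *m Rm *m w) 0 0 - (hermT u *m Rm *m z) 0 0
  - ((hermT v *m Rm *m w) 0 0 - (hermT v *m Rm *m z) 0 0).
Proof.
rewrite hermTB mulmxBl mulmxBr !mulmxBl mxEB (@mxEB _ _ (hermT u *m Rm *m w)).
by rewrite (@mxEB _ _ (hermT u *m Rm *m z)) alg1.
Qed.

Lemma pair_gen n (Rm : 'M[C]_n) (a b : C) (u v : 'cV[C]_n) : psd Rm ->
  0 <= Num.conj_op a * a * (hermT u *m Rm *m u) 0 0
       - Num.conj_op a * b * (hermT u *m Rm *m v) 0 0
       - (Num.conj_op b * a * (hermT v *m Rm *m u) 0 0
          - Num.conj_op b * b * (hermT v *m Rm *m v) 0 0).
Proof. by move=> pR; have := pR.2 (a *: u - b *: v); rewrite Qsub !Qscale. Qed.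

Lemma pair_ge0 n (Rm : 'M[C]_n) (x : 'cV[C]_n)
  (hx : forall i, Num.conj_op (x i 0) * x i 0 = 1) (pR : psd Rm) i j :
  0 <= Rm i i + Rm j j - Num.conj_op (x i 0) * Rm i j * x j 0
        - Num.conj_op (x j 0) * Rm j i * x i 0.
Proof.
have := @pair_gen n Rm (x i 0) (x j 0) (delta_mx i 0) (delta_mx j 0) pR.
rewrite 4!Qdelta.
rewrite !hx.
by rewrite alg2.
Qed.

Lemma sum_constn n (c : C) : \sum_(j < n) c = c *+ n.
Proof. by rewrite sumr_const card_ord. Qed.

Lemma quad_le n (Rm : 'M[C]_n) (x : 'cV[C]_n)
  (hx : forall i, Num.conj_op (x i 0) * x i 0 = 1) (pR : psd Rm) :
  (hermT x *m Rm *m x) 0 0 <= n%:R * \tr Rm.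
Proof.
set t := fun i j => Num.conj_op (x i 0) * Rm i j * x j 0.
have E1 : \sum_(i < n) \sum_(j < n) t i j = (hermT x *m Rm *m x) 0 0 by rewrite Qexp.
have E2 : \sum_(i < n) \sum_(j < n) t j i = (hermT x *m Rm *m x) 0 0.
  by rewrite exchange_big.
have E3 : \sum_(i < n) \sum_(j < n) Rm i i = \tr Rm *+ n.
  rewrite /mxtrace -sumrMnl; apply: eq_bigr => i _; exact: sum_constn.
have E4 : \sum_(i < n) \sum_(j < n) Rm j j = \tr Rm *+ n.
  by rewrite sum_constn.
have h : 0 <= \sum_(i < n) \sum_(j < n) (Rm i i + Rm j j - t i j - t j i).
  by apply: sumr_ge0 => i _; apply: sumr_ge0 => j _; exact: pair_ge0.
have : 0 <= (n%:R * \tr Rm - (hermT x *m Rm *m x) 0 0) * 2.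
  apply: (le_trans h); rewrite le_eqVlt; apply/orP; left; apply/eqP.
  under eq_bigr do rewrite !sumrB big_split /=.
  by rewrite !sumrB big_split /= -/t E1 E2 E3 E4 alg3.
move=> h2; rewrite -subr_ge0; move: h2; rewrite pmulr_lge0 //; exact: ltr0Sn.
Qed.

End H2.

Section H3.
Variable R : realType.
Local Notation C := R[i].

Lemma uform N Mt (a a2 : 'cV[C]_N) (c : 'cV[C]_Mt) (Phi : 'M[C]_N) (s : C) :
  a^T *m Phi *m (s *: (a2 *m c^T)) = (s * (a^T *m Phi *m a2) 0 0) *: c^T.
Proof.
rewrite -scalemxAr mulmxA {1}[a^T *m Phi *m a2]mx11_scalar. by rewrite mul_scalar_mx scalerA.
Qed.

Lemma quad_form N Mt (a a2 : 'cV[C]_N) (c : 'cV[C]_Mt) (Phi : 'M[C]_N) (s : C)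
  (Rm : 'M[C]_Mt) :
  quadTx a Phi (s *: (a2 *m c^T)) Rm
  = (s * (a^T *m Phi *m a2) 0 0) * Num.conj_op (s * (a^T *m Phi *m a2) 0 0)
    * (hermT (conjM c) *m Rm *m conjM c) 0 0.
Proof.
set k := s * (a^T *m Phi *m a2) 0 0; rewrite /quadTx.
have -> : a^T *m Phi *m (s *: (a2 *m c^T)) *m Rm *m hermT (s *: (a2 *m c^T))
   *m hermT Phi *m conjM a =
   (a^T *m Phi *m (s *: (a2 *m c^T))) *m Rm *m hermT (a^T *m Phi *m (s *: (a2 *m c^T))).
  by rewrite !hermT_mul hermT_tr !mulmxA.
rewrite uform -/k hermTZ hermT_tr hermT_conjM -scalemxAl -scalemxAl -scalemxAr scalerA.
by rewrite [LHS]mxE.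
Qed.

Lemma vform N Mr (a a2 : 'cV[C]_N) (b : 'cV[C]_Mr) (Phi : 'M[C]_N) (s : C) :
  (s *: (b *m a2^T)) *m Phi^T *m a = (s * (a^T *m Phi *m a2) 0 0) *: b.
Proof.
have E : a2^T *m Phi^T *m a = (a^T *m Phi *m a2)^T by rewrite !trmx_mul trmxK mulmxA.
have E' : b *m a2^T *m Phi^T *m a = b *m (a2^T *m Phi^T *m a) by rewrite !mulmxA.
rewrite -!scalemxAl E' E {1}[a^T *m Phi *m a2]mx11_scalar.
by rewrite tr_scalar_mx mul_mx_scalar scalerA.
Qed.

Lemma norm2C K (v : 'cV[C]_K) : (norm2 v)%:C = \sum_i v i 0 * Num.conj_op (v i 0).
Proof.
rewrite /norm2 rmorph_sum; apply: eq_bigr => i _.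
by apply: RRe_real; apply: ger0_real; exact: mul_conjC_ge0.
Qed.

Lemma nrm_scale K (k : C) (v : 'cV[C]_K) :
  \sum_i (k *: v) i 0 * Num.conj_op ((k *: v) i 0)
  = k * Num.conj_op k * \sum_i v i 0 * Num.conj_op (v i 0).
Proof.
rewrite big_distrr; apply: eq_bigr => i _; rewrite !mxE rmorphM /=; ring.
Qed.

Lemma nrm_steer dhat lam K th :
  \sum_i (steer dhat lam K th) i 0 * Num.conj_op ((steer dhat lam K th) i 0) = K%:R :> C.
Proof.
rewrite (eq_bigr (fun _ => 1)); last by move=> i _; rewrite !mxE expjJ.
by rewrite sumr_const card_ord.
Qed.

Lemma my_gexp N (a a2 : 'cV[C]_N) phi :
  (a^T *m phase_mx phi *m a2) 0 0 = \sum_n a n 0 * expj (phi n) * a2 n 0.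
Proof.
rewrite /phase_mx mul_mx_diag !mxE; apply: eq_bigr => n _; rewrite !mxE.
done.
Qed.

End H3.

Set Implicit Arguments.
Section H4.
Variable R : realType.
Local Notation C := R[i].

Definition sarg (dhat lam : R) (K : nat) (th : R) (i : 'I_K) : R :=
  pi * ((2 * i.+1)%:R - K%:R - 1) * dhat * sin th / lam.

Lemma steerE dhat lam K th i : (steer dhat lam K th) i 0 = expj (sarg dhat lam th i).
Proof. by rewrite mxE. Qed.

Lemma my_gnorm dhat lam N th th2 phi :
  `|((steer dhat lam N th)^T *m phase_mx phi *m steer dhat lam N th2) 0 0| <= N%:R :> C.
Proof.
rewrite my_gexp; apply: le_trans (ler_norm_sum _ _ _) _.
rewrite (eq_bigr (fun _ => 1)); first by rewrite sumr_const card_ord.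
by move=> n _; rewrite !steerE !normrM !norm_expj !mulr1.
Qed.

Definition phi0 dhat lam N th th2 (n : 'I_N) : R :=
  - (sarg dhat lam th n + sarg dhat lam th2 n).

Lemma gattain dhat lam N th th2 :
  ((steer dhat lam N th)^T *m phase_mx (phi0 dhat lam th th2) *m steer dhat lam N th2) 0 0
  = N%:R :> C.
Proof.
rewrite my_gexp (eq_bigr (fun _ => 1)); first by rewrite sumr_const card_ord.
move=> n _; rewrite !steerE !expjD /phi0.
have -> : sarg dhat lam th n + - (sarg dhat lam th n + sarg dhat lam th2 n) +
   sarg dhat lam th2 n = 0 by ring.
exact: expj0.
Qed.

Lemma hx_conj K (v : 'cV[C]_K) (hv : forall i, v i 0 * Num.conj_op (v i 0) = 1) :
  forall i, Num.conj_op (conjM v i 0) * conjM v i 0 = 1.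
Proof. by move=> i; rewrite !mxE conjCK. Qed.

Lemma mx11M (P Q : 'M[C]_1) : (P *m Q) 0 0 = P 0 0 * Q 0 0.
Proof. by rewrite mxE big_ord1. Qed.

Lemma hermT11 (P : 'M[C]_1) : hermT P 0 0 = Num.conj_op (P 0 0).
Proof. by rewrite !mxE. Qed.

Lemma rank1_psd K (k : R) (x : 'cV[C]_K) : 0 <= k -> psd (k%:C *: (x *m hermT x)).
Proof.
move=> hk; split.
  have ck : Num.conj_op (k%:C) = k%:C := conjc_real k.
  by rewrite hermTZ hermT_mul hermTK ck.
move=> z.
have -> : hermT z *m (k%:C *: (x *m hermT x)) *m z =
  k%:C *: ((hermT z *m x) *m hermT (hermT z *m x)).
  by rewrite hermT_mul hermTK -scalemxAr -scalemxAl !mulmxA.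
rewrite mxE mx11M hermT11; apply: mulr_ge0; first by rewrite lecR.
exact: mul_conjC_ge0.
Qed.

Lemma selfdot K (x : 'cV[C]_K) (hx : forall i, Num.conj_op (x i 0) * x i 0 = 1) :
  (hermT x *m x) 0 0 = K%:R.
Proof.
rewrite mxE (eq_bigr (fun _ => 1)); first by rewrite sumr_const card_ord.
by move=> i _; rewrite !mxE hx.
Qed.

End H4.

Lemma sup_lt (R : realType) (E1 E2 : set R) (w1 w2 : R) :
  (E2 !=set0)%classic -> ubound E2 w2 -> ubound E1 w1 -> E1 w1 -> w2 < w1 ->
  sup E2 < sup E1.
Proof.
move=> ne2 ub2 ub1 m1 lt.
apply: (le_lt_trans (ge_sup ne2 ub2)); apply: (lt_le_trans lt).
by apply: sup_upper_bound => //; split; [exists w1 | exists w1].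
Qed.

Lemma ltc0R (R : realType) (x : R) : (0 < x%:C) = (0 < x).
Proof. by rewrite ltcE /= eqxx. Qed.

Lemma lec0R (R : realType) (x : R) : (0 <= x%:C) = (0 <= x).
Proof. by rewrite lecE /= eqxx. Qed.

Unset Implicit Arguments.

Theorem theorem1 (R : realType) (N Mt Mr : nat) (dhat lam P0 sigma2 L : R)
  (alpha : R[i]) (th th1 th2 : R) :
  (0 < N)%N -> (0 < Mt)%N -> (0 < Mr)%N ->
  0 < dhat -> 0 < lam -> 0 < P0 -> 0 < sigma2 -> alpha != 0 -> 0 < L ->
  let a := steer dhat lam N in
  let b := steer dhat lam Mr in
  let c := steer dhat lam Mt in
  let Gt : 'M[R[i]]_(N, Mt) := (Num.sqrt L)%:C *: (a th2 *m (c th1)^T) in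
  let Gr : 'M[R[i]]_(Mr, N) := (Num.sqrt L)%:C *: (b th1 *m (a th2)^T) in
  N%:R > 1 / Num.sqrt L ->
  SNRstar P0 (SNR2 alpha sigma2 (a th) (b th) Gt Gr)
    < SNRstar P0 (SNR1 alpha sigma2 (a th) (b th) Gt Gr).
Proof.
move=> hN hMt hMr hd hl hP hs ha hL a b c Gt Gr hNL.
pose x1 := conjM (c th1).
have hx1 : forall i, Num.conj_op (x1 i 0) * x1 i 0 = 1.
  by apply: hx_conj => i; rewrite /c steerE expjJ.
pose q (Rm : 'M[R[i]]_Mt) := (hermT x1 *m Rm *m x1) 0 0.
pose gg (phi : 'I_N -> R) := ((a th)^T *m phase_mx phi *m a th2) 0 0.
have kk : forall g : R[i], (Num.sqrt L)%:C * g * Num.conj_op ((Num.sqrt L)%:C * g)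
    = L%:C * (g * Num.conj_op g).
  move=> g; rewrite rmorphM /=.
  have ck : Num.conj_op ((Num.sqrt L)%:C) = (Num.sqrt L)%:C := conjc_real _.
  rewrite ck.
  have sL : (Num.sqrt L)%:C * (Num.sqrt L)%:C = L%:C :> R[i].
    by rewrite -rmorphM /= -expr2 sqr_sqrtr // ltW.
  rewrite -sL; ring.
pose A := `|alpha| ^+ 2 / sigma2%:C * Mr%:R * L%:C.
have F2 : forall Rm phi, SNR2 alpha sigma2 (a th) (b th) Gt Gr Rm (phase_mx phi)
   = A * (gg phi * Num.conj_op (gg phi) * q Rm).
  move=> Rm phi; rewrite /SNR2 /Gt quad_form kk norm2C /b nrm_steer /A /q /gg /x1.
  ring.
have F1 : forall Rm phi, SNR1 alpha sigma2 (a th) (b th) Gt Gr Rm (phase_mx phi)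
   = A * L%:C * (gg phi * Num.conj_op (gg phi) * (gg phi * Num.conj_op (gg phi)) * q Rm).
  move=> Rm phi; rewrite /SNR1 /Gt /Gr quad_form vform norm2C nrm_scale kk /b nrm_steer.
  rewrite /A /q /gg /x1; ring.
have Gb : forall phi, 0 <= gg phi * Num.conj_op (gg phi) /\
    gg phi * Num.conj_op (gg phi) <= N%:R ^+ 2.
  move=> phi; rewrite -normCK; split; first exact: exprn_ge0 (normr_ge0 _).
  have gn := @my_gnorm R dhat lam N th th2 phi.
  by rewrite !expr2; apply: ler_pM; try exact: normr_ge0.
have Qb : forall Rm, psd Rm -> \tr Rm <= P0%:C -> 0 <= q Rm /\ q Rm <= Mt%:R * P0%:C.
  move=> Rm pR tR; split; first exact: pR.2.
  apply: le_trans (@quad_le R Mt Rm x1 hx1 pR) _.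
  by apply: ler_wpM2l => //; exact: ler0n.
have hB : 0 < A.
  rewrite /A; apply: mulr_gt0; last by rewrite ltc0R.
  apply: mulr_gt0; last by rewrite ltr0n.
  apply: mulr_gt0; first by rewrite exprn_gt0 // normr_gt0.
  by rewrite invr_gt0 ltc0R.
pose W2 := A * (N%:R ^+ 2 * (Mt%:R * P0%:C)).
pose W1 := A * L%:C * (N%:R ^+ 2 * N%:R ^+ 2 * (Mt%:R * P0%:C)).
have B2 : forall Rm phi, psd Rm -> \tr Rm <= P0%:C ->
    SNR2 alpha sigma2 (a th) (b th) Gt Gr Rm (phase_mx phi) <= W2.
  move=> Rm phi pR tR; rewrite F2 /W2; apply: ler_wpM2l; first exact: ltW.
  have [g0 g1] := Gb phi; have [q0 q1] := Qb Rm pR tR.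
  exact: ler_pM.
have hL0 : 0 <= L%:C :> R[i] by rewrite lec0R ltW.
have B1 : forall Rm phi, psd Rm -> \tr Rm <= P0%:C ->
    SNR1 alpha sigma2 (a th) (b th) Gt Gr Rm (phase_mx phi) <= W1.
  move=> Rm phi pR tR; rewrite F1 /W1; apply: ler_wpM2l.
    exact: mulr_ge0 (ltW hB) hL0.
  have [g0 g1] := Gb phi; have [q0 q1] := Qb Rm pR tR.
  apply: ler_pM => //; first exact: mulr_ge0.
  exact: ler_pM.
pose Rm0 := (P0 / Mt%:R)%:C *: (x1 *m hermT x1).
pose ph0 := fun n : 'I_N => @phi0 R dhat lam N th th2 n.
have hMt0 : Mt%:R != 0 :> R by rewrite pnatr_eq0 -lt0n.
have pR0 : psd Rm0 by apply: rank1_psd; apply: divr_ge0; [exact: ltW | exact: ler0n].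
have sd : (hermT x1 *m x1) 0 0 = Mt%:R := @selfdot R Mt x1 hx1.
have tR0 : \tr Rm0 = P0%:C.
  rewrite /Rm0 mxtraceZ mxtrace_mulC trace_mx11 sd -(rmorph_nat (real_complex R)).
  by rewrite -rmorphM /= divfK.
have q0 : q Rm0 = Mt%:R * P0%:C.
  have -> : q Rm0 = (P0 / Mt%:R)%:C * ((hermT x1 *m x1) 0 0 * (hermT x1 *m x1) 0 0).
    rewrite /q /Rm0 -scalemxAr -scalemxAl [LHS]mxE -mx11M; congr (_ * _).
    by rewrite !mulmxA.
  rewrite sd -(rmorph_nat (real_complex R)) -!rmorphM /=; congr (_ %:C).
  by rewrite natrM mulrA divfK // mulrC.
have g0 : gg ph0 = N%:R by rewrite /gg /a /ph0 gattain.
have At : SNR1 alpha sigma2 (a th) (b th) Gt Gr Rm0 (phase_mx ph0) = W1.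
  rewrite F1 g0 q0 /W1 rmorph_nat; congr (_ * _); rewrite !expr2 //.
have LN : 1 < L * N%:R ^+ 2.
  have sLp : 0 < Num.sqrt L by rewrite sqrtr_gt0.
  have h1 : 1 < N%:R * Num.sqrt L by rewrite -ltr_pdivrMr.
  have h2 : 1 < (N%:R * Num.sqrt L) * (N%:R * Num.sqrt L).
    by apply: (lt_trans h1); rewrite ltr_pMr // (lt_trans ltr01 h1).
  by rewrite -expr2 exprMn sqr_sqrtr ?ltW // mulrC in h2.
have W2p : 0 < W2.
  rewrite /W2; apply: mulr_gt0 => //; apply: mulr_gt0; first by rewrite exprn_gt0 // ltr0n.
  by apply: mulr_gt0; [rewrite ltr0n | rewrite ltc0R].
have Wlt : W2 < W1.
  have -> : W1 = W2 * (L * N%:R ^+ 2)%:C.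
    by rewrite /W1 /W2 rmorphM rmorphXn rmorph_nat /=; ring.
  rewrite -{1}[W2]mulr1 ltr_pM2l //.
  by rewrite ltcE /= eqxx /=.
rewrite /SNRstar; apply: (@sup_lt R _ _ (complex.Re W1) (complex.Re W2)).
- exists (complex.Re (SNR2 alpha sigma2 (a th) (b th) Gt Gr Rm0 (phase_mx ph0))).
  by exists Rm0, ph0; split => //; split => //; rewrite tR0.
- move=> y [Rm [phi [pR [tR ->]]]].
  by have := B2 Rm phi pR tR; rewrite lecE => /andP [].
- move=> y [Rm [phi [pR [tR ->]]]].
  by have := B1 Rm phi pR tR; rewrite lecE => /andP [].
- by exists Rm0, ph0; split => //; split; [rewrite tR0 | rewrite At].
- by move: Wlt; rewrite ltcE => /andP [].
Qed.
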